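(* Let $\mathbf G=(G,\le,\cdot,/,0,1)$ be a left-residuated po-groupoid satisfying the double negation law $\neg\neg x=x$ and the equation $(x\to y)\to y=(y\to x)\to x$ for all $x,y\in G$. Then for all $x,y,z\in G$: (a) $1\to x=x$; (b) $x\le y\to x$; (c) $x\le y$ iff $\neg y\le\neg x$ iff $x\to y=1$; (d) if $x\le y$ then $y\to z\le x\to z$.
   Context: A (bounded integral) left-residuated po-groupoid is a structure $\mathbf G=(G,\le,\cdot,/,0,1)$ where $(G,\le,0,1)$ is a bounded poset with least element $0$ and greatest element $1$, $\cdot$ is a binary operation on $G$ with $1\cdot x=x\cdot 1=x$ for all $x$ (no associativity, commutativity or monotonicity is assumed), and $/$ is a binary operation on $G$ satisfying the left residuation law: for all $x,y,z\in G$, $x\cdot y\le z\iff x\le z/y$. The negation is defined by $\neg x:=0/x$ and the implication by $x\to y:=\neg x/\neg y$. *)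

(* Defs.v *)
Record LRPOGroupoid := {
  carrier :> Type;
  le : carrier -> carrier -> Prop;
  mul : carrier -> carrier -> carrier;
  rdiv : carrier -> carrier -> carrier;
  zero : carrier;
  one : carrier;
  le_refl : forall x, le x x;
  le_antisym : forall x y, le x y -> le y x -> x = y;
  le_trans : forall x y z, le x y -> le y z -> le x z;
  zero_least : forall x, le zero x;
  one_greatest : forall x, le x one;
  mul_one_l : forall x, mul one x = x;
  mul_one_r : forall x, mul x one = x;
  residuation : forall x y z, le (mul x y) z <-> le x (rdiv z y)
}.

Arguments le {l} x y.
Arguments mul {l} x y.
Arguments rdiv {l} x y.
Arguments zero {l}.
Arguments one {l}.

Definition neg {G : LRPOGroupoid} (x : G) : G := rdiv zero x.
Definition imp {G : LRPOGroupoid} (x y : G) : G := rdiv (neg x) (neg y).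

(* Main.v *)
Require Import Defs.

Section S.
Variable G : LRPOGroupoid.

Lemma div_one (y z : G) : rdiv z y = one <-> le y z.
Proof.
  split.
  - intros H. pose proof (proj2 (residuation G one y z)) as R.
    rewrite mul_one_l in R. apply R. rewrite H. apply le_refl.
  - intros H. apply le_antisym. apply one_greatest.
    apply (proj1 (residuation G one y z)). rewrite mul_one_l. exact H.
Qed.

Lemma neg_one : neg (one : G) = zero.
Proof.
  unfold neg. apply le_antisym; [|apply zero_least].
  pose proof (proj2 (residuation G (rdiv zero one) one zero)) as R.
  rewrite mul_one_r in R. apply R. apply le_refl.
Qed.

Lemma div_mono (y z z' : G) : le z z' -> le (rdiv z y) (rdiv z' y).
Proof.
  intros H. apply (proj1 (residuation G _ _ _)).
  eapply le_trans; [|exact H]. apply (proj2 (residuation G _ _ _)). apply le_refl.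
Qed.
End S.

Theorem lemma3 (G : LRPOGroupoid)
  (dneg : forall x : G, neg (neg x) = x)
  (hyp : forall x y : G, imp (imp x y) y = imp (imp y x) x) :
  forall x y z : G,
    imp one x = x /\
    le x (imp y x) /\
    ((le x y <-> le (neg y) (neg x)) /\ (le (neg y) (neg x) <-> imp x y = one)) /\
    (le x y -> le (imp y z) (imp x z)).
Proof.
  assert (Ha : forall x : G, imp one x = x).
  { intros x. unfold imp. rewrite neg_one. fold (neg (neg x)). apply dneg. }
  assert (Hb : forall x y : G, le x (imp y x)).
  { intros x y. unfold imp. apply (proj1 (residuation G _ _ _)).
    eapply le_trans; [|apply zero_least].
    apply (proj2 (residuation G _ _ _)). fold (neg (neg x)). rewrite dneg. apply le_refl. }
  assert (Hc1 : forall u v : G, imp u v = one <-> le (neg v) (neg u)).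
  { intros u v. unfold imp. apply div_one. }
  assert (HL : forall u v : G, le (neg v) (neg u) -> le u v).
  { intros u v H. apply Hc1 in H.
    assert (E : imp (imp u v) v = v) by (rewrite H; apply Ha).
    rewrite hyp in E. rewrite <- E. apply Hb. }
  assert (Hc : forall x y : G, le x y <-> le (neg y) (neg x)).
  { intros x y. split; [|apply HL].
    intros H. apply HL. rewrite !dneg. exact H. }
  intros x y z. split; [apply Ha|]. split; [apply Hb|]. split.
  - split; [apply Hc|]. split; intro H; apply Hc1; exact H.
  - intros H. apply Hc in H. unfold imp. apply div_mono. exact H.
Qed.
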